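(* Let $A$ be a set of vertices in a Johnson graph $J(m,k)$ that is shattered by the edge relation, and assume $|A|\ge 4$. Then there do not exist three vertices in $A$ that are pairwise at distance $2$ from each other.
   Context: For $m\ge k$ and a set $X$ with $|X|=m$, the Johnson graph $J(m,k)$ has as vertices the $k$-element subsets of $X$, two vertices adjacent iff their symmetric difference has size $2$. $N(v)$ is the set of vertices adjacent to $v$ and $d$ is graph distance. A set $A$ of vertices of a graph $G$ is shattered by the edge relation if $\{A\cap N(w)\mid w\in V(G)\}$ is the full power set of $A$. *)

(* Defs.v *)
From mathcomp Require Import all_boot.
Set Implicit Arguments. Unset Strict Implicit. Unset Printing Implicit Defensive.

Definition jvert (m k : nat) := {S : {set 'I_m} | #|S| == k}.

Definition jadj (m k : nat) (u v : jvert m k) : bool :=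
  #|(val u :\: val v) :|: (val v :\: val u)| == 2.

Definition jnbhd (m k : nat) (v : jvert m k) : {set jvert m k} :=
  [set w | jadj v w].

Definition jwalk (m k : nat) (n : nat) (u v : jvert m k) : Prop :=
  exists s : seq (jvert m k), [/\ size s = n, path (@jadj m k) u s & last u s = v].

Definition jdist_eq (m k : nat) (u v : jvert m k) (n : nat) : Prop :=
  jwalk n u v /\ forall n', n' < n -> ~ jwalk n' u v.

Definition shattered (m k : nat) (A : {set jvert m k}) : Prop :=
  forall B : {set jvert m k}, B \subset A ->
    exists w : jvert m k, A :&: jnbhd w = B.

(* Main.v *)
Require Import Defs.
From mathcomp Require Import all_boot.
From mathcomp Require Import zify.

Section Aux.
Variable T : finType.
Implicit Types x y z w : {set T}.

Lemma dsym x y : #|x| = #|y| -> #|x :\: y| = #|y :\: x|.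
Proof. by rewrite !cardsD setIC => ->. Qed.

Lemma cardI_D x y : #|x :&: y| = #|x| - #|x :\: y|.
Proof. rewrite cardsD; have := subset_leq_card (subsetIl x y); lia. Qed.

Lemma symdiff_card x y : #|x| = #|y| ->
  #|(x :\: y) :|: (y :\: x)| = 2 * #|x :\: y|.
Proof.
move=> e; rewrite cardsU (dsym _ _ e).
have -> : (x :\: y) :&: (y :\: x) = set0.
  by apply/setP => t; rewrite !inE; case: (t \in x); case: (t \in y).
rewrite cards0 -(dsym _ _ e); lia.
Qed.

Lemma incl_pair x y w k : #|x| = k -> #|y| = k -> #|w| = k ->
  #|x :\: y| = 2 -> #|x :\: w| = 1 -> #|y :\: w| = 1 -> x :&: y \subset w.
Proof.
move=> cx cy cw dxy dxw dyw.
apply/subsetP => c /setIP [xc yc]; apply/negPn/negP => wc.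
have h1 : forall s, #|s :\: w| = 1 -> c \in s -> s :\ c \subset w.
  move=> s ds sc; have : [set c] == s :\: w.
    by rewrite eqEcard ds cards1 andbT sub1set inE wc sc.
  move/eqP => E; apply/subsetP => t; rewrite !inE => /andP [tc ts].
  apply/negPn/negP => tw.
  have : t \in s :\: w by rewrite inE tw ts.
  by rewrite -E inE (negbTE tc).
have : (x :|: y) :\ c \subset w.
  apply/subsetP => t; rewrite !inE => /andP [tc /orP [tx|ty]].
  - by apply: (subsetP (h1 x dxw xc)); rewrite !inE tc tx.
  - by apply: (subsetP (h1 y dyw yc)); rewrite !inE tc ty.
move/subset_leq_card.
have := cardsD1 c (x :|: y); rewrite inE xc /=.
have := cardsUI x y; rewrite cardI_D dxy.
have := subset_leq_card (subsetDl x y). lia.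
Qed.

Lemma sub_two x y z w k t : #|y| = k -> #|w| = k -> #|y :\: z| = 2 ->
  #|w :\: y| = 1 -> #|w :\: z| = 1 -> t \in w -> t \notin y -> t \notin z -> False.
Proof.
move=> cy cw dyz dwy dwz tw ty tz.
have h1 : forall s, #|w :\: s| = 1 -> t \notin s -> w :\ t \subset s.
  move=> s ds ts; have : [set t] == w :\: s.
    by rewrite eqEcard ds cards1 andbT sub1set inE tw ts.
  move/eqP => E; apply/subsetP => u; rewrite !inE => /andP [ut uw].
  apply/negPn/negP => us.
  have : u \in w :\: s by rewrite inE us uw.
  by rewrite -E inE (negbTE ut).
have : w :\ t \subset y :&: z.
  apply/subsetP => u uw; rewrite inE.
  by rewrite (subsetP (h1 y dwy ty) _ uw) (subsetP (h1 z dwz tz) _ uw).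
move/subset_leq_card; rewrite cardI_D dyz.
have := cardsD1 t w; rewrite tw.
have := subset_leq_card (subsetDl y z). lia.
Qed.

End Aux.
Arguments dsym {T}.
Arguments cardI_D {T}.
Arguments symdiff_card {T}.
Arguments incl_pair {T x y w k}.
Arguments sub_two {T x y z w k t}.

Lemma common_unique (T : finType) (x y z w w' : {set T}) k :
  #|x| = k -> #|y| = k -> #|z| = k -> #|w| = k -> #|w'| = k ->
  #|x :\: y| = 2 -> #|y :\: z| = 2 -> #|x :\: z| = 2 ->
  #|x :\: w| = 1 -> #|y :\: w| = 1 -> #|z :\: w| = 1 ->
  #|x :\: w'| = 1 -> #|y :\: w'| = 1 -> #|z :\: w'| = 1 -> w = w'.
Proof.
move=> cx cy cz cw cw' dxy dyz dxz xw yw zw xw' yw' zw'.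
have s := fun (a b : {set T}) (ca : #|a| = k) (cb : #|b| = k) => dsym a b (etrans ca (esym cb)).
have dyx : #|y :\: x| = 2 by rewrite -s.
have dzy : #|z :\: y| = 2 by rewrite -s.
have dzx : #|z :\: x| = 2 by rewrite -s.
have wx : #|w :\: x| = 1 by rewrite -s.
have wy : #|w :\: y| = 1 by rewrite -s.
have wz : #|w :\: z| = 1 by rewrite -s.
have sub1 : w \subset (x :&: y) :|: (x :&: z) :|: (y :&: z).
  apply/subsetP => t tw; rewrite !inE.
  case tx: (t \in x); case ty: (t \in y); case tz: (t \in z) => //=.
  - by case: (sub_two cy cw dyz wy wz tw (negbT ty) (negbT tz)).
  - by case: (sub_two cx cw dxz wx wz tw (negbT tx) (negbT tz)).
  - by case: (sub_two cx cw dxy wx wy tw (negbT tx) (negbT ty)).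
  - by case: (sub_two cx cw dxy wx wy tw (negbT tx) (negbT ty)).
have sub2 : (x :&: y) :|: (x :&: z) :|: (y :&: z) \subset w'.
  rewrite !subUset (incl_pair cx cy cw' dxy xw' yw') (incl_pair cx cz cw' dxz xw' zw').
  by rewrite (incl_pair cy cz cw' dyz yw' zw').
have sub := subset_trans sub1 sub2.
apply/eqP; rewrite eqEcard sub cw cw' /=.
exact: leqnn.
Qed.

Section J.
Variables m k : nat.

Lemma jcard (u : jvert m k) : #|val u| = k.
Proof. exact: (eqP (valP u)). Qed.

Lemma adjE (u v : jvert m k) : jadj u v = (#|val u :\: val v| == 1).
Proof.
rewrite /jadj (symdiff_card _ _); last by rewrite !jcard.
by rewrite -[2 in LHS]muln1 eqn_pmul2l.
Qed.

Lemma dist2E (u v : jvert m k) : jdist_eq u v 2 -> #|val u :\: val v| = 2.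
Proof.
move=> [[s [hs hp hl]] hn].
case: s hs hp hl => [|a [|b [|]]] //= _ /and3P [ha hb _] hl; subst b.
have e : forall x y : jvert m k, #|val x :\: val y| = #|val y :\: val x|.
  by move=> x y; apply: dsym; rewrite !jcard.
rewrite adjE in ha; rewrite adjE in hb.
have le : #|val u :\: val v| <= 2.
  have H : val u :\: val v \subset (val u :\: val a) :|: (val a :\: val v).
    by apply/subsetP => t; rewrite !inE; case: (t \in val a); case: (t \in val u); case: (t \in val v).
  have h := subset_leq_card H; apply: leq_trans h _.
  by rewrite cardsU (eqP ha) (eqP hb); lia.
have n1 : #|val u :\: val v| != 1.
  apply/negP => h; apply: (hn 1) => //; exists [:: v]; split => //=.
  by rewrite adjE h.
have n0 : #|val u :\: val v| != 0.
  apply/negP => /eqP h; apply: (hn 0) => //; exists [::]; split => //=.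
  apply: val_inj; apply/eqP; rewrite eqEcard !jcard leqnn andbT.
  by rewrite -setD_eq0 -cards_eq0 h.
by move: le n0 n1; case: #|_| => [|[|[|n]]].
Qed.

End J.
Arguments dist2E {m k u v}.
Arguments jcard {m k}.
Arguments adjE {m k}.

Theorem mainTheorem6 (m k : nat) (A : {set jvert m k}) :
  k <= m -> shattered A -> 4 <= #|A| ->
  ~ (exists x y z : jvert m k,
       [/\ x \in A, y \in A & z \in A] /\
       [/\ jdist_eq x y 2, jdist_eq y z 2 & jdist_eq x z 2]).
Proof.
move=> _ hsh hA [x [y [z [[xA yA zA] [dxy dyz dxz]]]]].
move: (dist2E dxy) (dist2E dyz) (dist2E dxz) => cxy cyz cxz.
set B1 := [set x; y; z].
have sB1 : B1 \subset A.
  by apply/subsetP => t; rewrite !inE => /orP [/orP [/eqP->|/eqP->]|/eqP->].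
have [a aA aN] : exists2 a, a \in A & a \notin B1.
  have nsub : ~~ (A \subset B1).
    apply/negP => H; have := subset_leq_card H; rewrite /B1 -setUA !cardsU1 cards1.
    move: hA; case: (x \notin _); case: (y \notin _) => /=; lia.
  by case/subsetPn: nsub => a ha hb; exists a.
set B2 := a |: B1.
have sB2 : B2 \subset A by rewrite subUset sub1set aA sB1.
have [w1 e1] := hsh B1 sB1.
have [w2 e2] := hsh B2 sB2.
have adj : forall (w : jvert m k) B, A :&: jnbhd w = B -> forall t, t \in B ->
    #|val t :\: val w| = 1.
  move=> w B e t tB; have : t \in A :&: jnbhd w by rewrite e.
  rewrite !inE adjE => /andP [_ /eqP h]; rewrite -h; apply: dsym.
  by rewrite !jcard.
have inB1 : [/\ x \in B1, y \in B1 & z \in B1] by rewrite !inE !eqxx !orbT.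
have inB2 : [/\ x \in B2, y \in B2 & z \in B2] by rewrite !inE !eqxx !orbT.
case: inB1 => x1 y1 z1; case: inB2 => x2 y2 z2.
have ew : w1 = w2.
  apply: val_inj; apply: (common_unique _ (val x) (val y) (val z) (val w1) (val w2) k);
    rewrite ?jcard //; by apply: adj; eassumption.
have : a \in A :&: jnbhd w2 by rewrite e2 !inE eqxx.
rewrite -ew e1 => h; by rewrite h in aN.
Qed.
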